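(* Let $N$ be a nonnegative integer and $m\in\{0,1,\dots,N\}$. Then for all $x\in\mathbb{C}$: $$K_{2m}(x+N+1;\tfrac12,2N+1)=\frac{(\frac12)_m}{(-N-\frac12)_m}\,R_m(x(x+1);-\tfrac12,\tfrac12,N),$$ $$K_{2m+1}(x+N+1;\tfrac12,2N+1)=\frac{(\frac32)_m}{(-N-\frac12)_{m+1}}\,(x+\tfrac12)\,R_m(x(x+1);\tfrac12,-\tfrac12,N).$$
   Context: $(c)_k=c(c+1)\cdots(c+k-1)$. Krawtchouk polynomials: $K_n(x;p,N)={}_2F_1(-n,-x;-N;p^{-1})=\sum_{k=0}^n\frac{(-n)_k(-x)_k}{(-N)_k\,k!}p^{-k}$. Dual Hahn polynomials: $R_n(y(y+\gamma+\delta+1);\gamma,\delta,N)={}_3F_2(-n,-y,y+\gamma+\delta+1;\gamma+1,-N;1)$, regarded as a polynomial in $\lambda=y(y+\gamma+\delta+1)$; here $\gamma+\delta+1=1$, so $R_m(x(x+1);\gamma,\delta,N)={}_3F_2(-m,-x,x+1;\gamma+1,-N;1)$. *)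

(* Defs.v *)
(* The complex numbers are modelled by an arbitrary
   numClosedFieldType (algebraically closed numeric field, e.g. algC). *)
From HB Require Import structures.
From mathcomp Require Import all_boot all_order all_algebra.
Set Implicit Arguments. Unset Strict Implicit. Unset Printing Implicit Defensive.
Import Order.TTheory GRing.Theory Num.Theory.
Local Open Scope ring_scope.

Definition poch (R : nzRingType) (c : R) (k : nat) : R :=
  \prod_(i < k) (c + i%:R).

(* Krawtchouk polynomial K_n(x; p, N) = 2F1(-n, -x; -N; 1/p)
   = sum_{k=0}^n (-n)_k (-x)_k / ((-N)_k k!) p^{-k}. *)
Definition krawtchouk (R : fieldType) (n : nat) (x p : R) (N : nat) : R :=
  \sum_(k < n.+1)
     poch (- n%:R) k * poch (- x) k / (poch (- N%:R) k * k`!%:R) * p^-1 ^+ k.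

(* Dual Hahn polynomial R_n(y(y+g+d+1); g, d, N)
   = 3F2(-n, -y, y+g+d+1; g+1, -N; 1), given through the parameter y. *)
Definition dualHahn (R : fieldType) (n : nat) (y g d : R) (N : nat) : R :=
  \sum_(k < n.+1)
     poch (- n%:R) k * poch (- y) k * poch (y + g + d + 1) k
       / (poch (g + 1) k * poch (- N%:R) k * k`!%:R).

(* Main.v *)
Require Import Defs.
From HB Require Import structures.
From mathcomp Require Import all_boot all_order all_algebra.
From mathcomp Require Import ring zify.
Import Order.TTheory GRing.Theory Num.Theory.
Local Open Scope ring_scope.

Section Helpers.
Variable R : numFieldType.
Implicit Types (c y : R).

Lemma poch0 c : poch c 0 = 1. Proof. by rewrite /poch big_ord0. Qed.
Lemma poch_recr c k : poch c k.+1 = poch c k * (c + k%:R).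
Proof. by rewrite /poch big_ord_recr. Qed.
Lemma poch_recl c k : poch c k.+1 = c * poch (c + 1) k.
Proof.
rewrite /poch big_ord_recl /= addr0; congr (_ * _); apply: eq_bigr => i _.
by rewrite -nat1r addrA.
Qed.
Lemma poch_van n k : (n < k)%N -> poch (- n%:R : R) k = 0.
Proof. by move=> H; rewrite /poch (bigD1 (Ordinal H)) //= addNr mul0r. Qed.
Lemma poch_neq0 c k : (forall i, (i < k)%N -> c + i%:R != 0) -> poch c k != 0.
Proof. by move=> H; apply/prodf_neq0 => i _; exact: H. Qed.

Lemma PM m k : m%:R * poch (- (m.-1)%:R : R) k = (m%:R - k%:R) * poch (- m%:R) k.
Proof.
case: m => [|m] /=.
  case: k => [|k]; first by rewrite !poch0 subrr !mul0r.
  by rewrite !mul0r [poch (-0%:R) _]poch_recl oppr0 mul0r mulr0.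
have e1 := poch_recl (- m.+1%:R : R) k.
rewrite poch_recr in e1.
rewrite (_ : - m.+1%:R + 1 = - m%:R :> R) in e1; last by rewrite -natr1; ring.
apply: (@addIr _ (- m.+1%:R * poch (- m%:R) k)).
rewrite -{2}e1 -natr1; ring.
Qed.

Lemma two_neq0 : (2 : R) != 0. Proof. by rewrite pnatr_eq0. Qed.

Lemma pos_neq0 (a b : R) : 0 <= a -> 0 < b -> a + b != 0.
Proof. by move=> ha hb; rewrite gt_eqF // ltr_wpDl. Qed.

Lemma half_neq0 j : (2^-1 : R) + j%:R != 0.
Proof. by rewrite addrC pos_neq0 // invr_gt0 ltr0n. Qed.

Lemma odd_neq0 j : 2 * j%:R + 1 != 0 :> R.
Proof. by rewrite pos_neq0 // mulr_ge0. Qed.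

Lemma H3 k : poch (2^-1 + 1 : R) k = poch 2^-1 k * (2 * k%:R + 1).
Proof.
have e := poch_recl (2^-1 : R) k; rewrite poch_recr in e.
apply: (@mulfI _ (2^-1 : R)); first by rewrite invr_eq0 two_neq0.
by rewrite -e; field.
Qed.

Lemma sum_ext (F : nat -> R) a b : (a <= b)%N ->
  (forall k, (a <= k)%N -> F k = 0) -> \sum_(k < a) F k = \sum_(k < b) F k.
Proof.
elim: b => [|b IH] hab H; first by move: hab; rewrite leqn0 => /eqP ->.
case: (ltngtP a b.+1) hab => // [hlt|->] _ //.
by rewrite big_ord_recr /= -IH // H // addr0.
Qed.

Lemma sum_shift (G : nat -> R) L :
  \sum_(k < L) G k.+1 = \sum_(k < L.+1) G k - G 0%N.
Proof. by rewrite big_ord_recl addrC addKr. Qed.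

End Helpers.

Section Kraw.
Variable R : numFieldType.

Definition kv (y : R) (M k : nat) : R :=
  poch (- y) k / (poch (- M%:R) k * k`!%:R) * 2 ^+ k.
Definition Kr (y : R) M n := \sum_(k < n.+1) poch (- n%:R) k * kv y M k.

Lemma krawE y M n : krawtchouk n y 2^-1 M = Kr y M n.
Proof. by rewrite /krawtchouk /Kr invrK; apply: eq_bigr => k _; rewrite /kv !mulrA. Qed.

Lemma pochM_neq0 M k : (k <= M)%N -> poch (- M%:R : R) k != 0.
Proof.
move=> hk; apply: poch_neq0 => i hi.
by rewrite addrC subr_eq0 eqr_nat ltn_eqF // (leq_trans hi hk).
Qed.

Lemma kv_shift y M k : (k.+1 <= M)%N ->
  (M%:R - 2 * y) * kv y M k
  = (M%:R - 2 * k%:R) * kv y M k + (k%:R - M%:R) * k.+1%:R * kv y M k.+1.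
Proof.
move=> hk.
have h1 := @pochM_neq0 M k (ltnW hk).
have h2 : - M%:R + k%:R != 0 :> R.
  by rewrite addrC subr_eq0 eqr_nat ltn_eqF.
have h3 : k`!%:R != 0 :> R by rewrite pnatr_eq0 -lt0n fact_gt0.
have h4 : k.+1%:R != 0 :> R by rewrite pnatr_eq0.
rewrite /kv !poch_recr factS natrM exprS.
by field; rewrite h3 nat1r h4 h2 h1.
Qed.

Lemma KC n M k :
  poch (- n%:R : R) k * (M%:R - 2 * k%:R) + poch (- n%:R) k.-1 * (k.-1%:R - M%:R) * k%:R
  = (M%:R - n%:R) * poch (- n.+1%:R) k + n%:R * poch (- n.-1%:R) k.
Proof.
rewrite PM; case: k => [|j]; first by rewrite !poch0 /=; ring.
rewrite [poch (- n.+1%:R) _]poch_recl.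
rewrite (_ : - n.+1%:R + 1 = - n%:R :> R); last by rewrite -natr1; ring.
rewrite [poch (- n%:R) j.+1]poch_recr /=.
move: (poch (- n%:R : R) j) => X.
rewrite -!natr1; ring.
Qed.

Lemma Kr_rec y M n : (n.+1 <= M)%N ->
  (M%:R - 2 * y) * Kr y M n = (M%:R - n%:R) * Kr y M n.+1 + n%:R * Kr y M n.-1.
Proof.
move=> hn.
have e1 : Kr y M n = \sum_(k < n.+2) poch (- n%:R) k * kv y M k.
  by rewrite /Kr; apply: (@sum_ext _ (fun k => poch (- n%:R) k * kv y M k)) => // k hk; rewrite poch_van ?mul0r.
have e2 : Kr y M n.-1 = \sum_(k < n.+2) poch (- n.-1%:R) k * kv y M k.
  rewrite /Kr; apply: (@sum_ext _ (fun k => poch (- n.-1%:R) k * kv y M k)) => [|k hk]; first lia.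
  by rewrite poch_van ?mul0r.
rewrite e1 e2 /Kr !mulr_sumr.
pose G k := poch (- n%:R : R) k.-1 * (k.-1%:R - M%:R) * k%:R * kv y M k.
transitivity (\sum_(k < n.+2) (poch (- n%:R) k * (M%:R - 2 * k%:R) * kv y M k
                               + G k.+1)).
  apply: eq_bigr => [[k hk]] _ /=; rewrite /G /=.
  have [kn|kn] := ltnP k n.+1.
    rewrite mulrCA kv_shift; last by apply: leq_trans hn.
    ring.
  by rewrite poch_van // !mul0r mulr0 addr0.
have G0 : G 0%N = 0 by rewrite /G /= mulr0 mul0r.
have GL : G n.+2 = 0 by rewrite /G /= poch_van // !mul0r.
rewrite big_split /= sum_shift [\sum_(k < n.+3) G k]big_ord_recr /= G0 GL subr0 addr0.
rewrite -big_split -big_split /=.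
apply: eq_bigr => k _; rewrite /G.
move: (kv y M k) => v.
transitivity ((poch (- n%:R : R) k * (M%:R - 2 * k%:R)
   + poch (- n%:R) k.-1 * (k.-1%:R - M%:R) * k%:R) * v); first ring.
rewrite KC; ring.
Qed.
End Kraw.

Section DH.
Variable R : numFieldType.
Variables (x : R) (N : nat).

Definition dw k := poch (- x) k * poch (x + 1) k / (poch (- N%:R) k * k`!%:R).
Definition DA m := \sum_(k < m.+1) poch (- m%:R : R) k / poch 2^-1 k * dw k.
Definition DB m := \sum_(k < m.+1) poch (- m%:R : R) k / poch (2^-1 + 1) k * dw k.

Lemma DAE m : dualHahn m x (- 2^-1) 2^-1 N = DA m.
Proof.
rewrite /dualHahn /DA subrK (_ : - 2^-1 + 1 = 2^-1 :> R); last by field.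
apply: eq_bigr => k _; rewrite /dw !invfM; ring.
Qed.

Lemma DBE m : dualHahn m x 2^-1 (- 2^-1) N = DB m.
Proof.
rewrite /dualHahn /DB addrK.
apply: eq_bigr => k _; rewrite /dw !invfM; ring.
Qed.

Lemma dw_shift k : (k.+1 <= N)%N ->
  x * (x + 1) * dw k = k%:R * k.+1%:R * dw k - (k%:R - N%:R) * k.+1%:R * dw k.+1.
Proof.
move=> hk.
have h1 := @pochM_neq0 R N k (ltnW hk).
have h2 : - N%:R + k%:R != 0 :> R.
  by rewrite addrC subr_eq0 eqr_nat ltn_eqF.
have h3 : k`!%:R != 0 :> R by rewrite pnatr_eq0 -lt0n fact_gt0.
have h4 : k.+1%:R != 0 :> R by rewrite pnatr_eq0.
rewrite /dw !poch_recr factS natrM.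
by field; rewrite h3 nat1r h4 h2 h1.
Qed.

Lemma hn0 k : poch (2^-1 : R) k != 0.
Proof. by apply: poch_neq0 => i _; apply: half_neq0. Qed.

Lemma DI m : (2 * m%:R + 1) * DB m = DA m + 2 * m%:R * DB m.-1.
Proof.
have e : DB m.-1 = \sum_(k < m.+1) poch (- m.-1%:R : R) k / poch (2^-1 + 1) k * dw k.
  rewrite /DB; apply: (@sum_ext _ (fun k => poch (- m.-1%:R : R) k / poch (2^-1 + 1) k * dw k)) => [|k hk]; first lia.
  by rewrite poch_van ?mul0r.
rewrite e /DB /DA !mulr_sumr -big_split /=; apply: eq_bigr => k _.
have E := PM R m k.
move: (poch (- m.-1%:R : R) k) E => Q E.
rewrite (_ : 2 * m%:R * (Q / poch (2^-1 + 1) k * dw k) = 2 * (m%:R * Q) / poch (2^-1 + 1) k * dw k); last by ring.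
rewrite E H3.
have := hn0 k; have := odd_neq0 R k.
move: (poch (2^-1 : R) k) (poch (- m%:R : R) k) (dw k) => h P w h1 h2.
by field; rewrite h1 h2.
Qed.

Lemma DIIC m k :
  2 * (m%:R - N%:R) * (poch (- m.+1%:R : R) k / poch 2^-1 k)
  = 4 * (poch (- m%:R : R) k / poch (2^-1 + 1) k * k%:R * k.+1%:R
         - poch (- m%:R : R) k.-1 / poch (2^-1 + 1) k.-1 * (k.-1%:R - N%:R) * k%:R)
    + poch (- m%:R : R) k / poch (2^-1 + 1) k
    + (2 * m%:R - 2 * N%:R - 1) * (poch (- m%:R : R) k / poch 2^-1 k).
Proof.
rewrite !H3; case: k => [|j] /=.
  by rewrite !poch0; field.
rewrite (@poch_recl R (- m.+1%:R) j).
rewrite (_ : - m.+1%:R + 1 = - m%:R :> R); last by rewrite -natr1; ring.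
rewrite (@poch_recr R (- m%:R) j) !poch_recr.
have := hn0 j; have := odd_neq0 R j; have := odd_neq0 R j.+1; have := half_neq0 R j.
move: (poch (2^-1 : R) j) (poch (- m%:R : R) j) => h P h1 h2 h3 h4.
rewrite -!natr1.
by field; rewrite (addrC 1) (mulrC _ 2) h3 h4 natr1 h2.
Qed.

Lemma DII m : (m.+1 <= N)%N ->
  2 * (m%:R - N%:R) * DA m.+1
  = (4 * (x * (x + 1)) + 1) * DB m + (2 * m%:R - 2 * N%:R - 1) * DA m.
Proof.
move=> hm.
pose G k := poch (- m%:R : R) k.-1 / poch (2^-1 + 1) k.-1 * (k.-1%:R - N%:R) * k%:R * dw k.
have L : x * (x + 1) * DB m = \sum_(k < m.+2)
   (poch (- m%:R : R) k / poch (2^-1 + 1) k * k%:R * k.+1%:R * dw k - G k).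
  rewrite /DB mulr_sumr.
  transitivity (\sum_(k < m.+1)
   (poch (- m%:R : R) k / poch (2^-1 + 1) k * k%:R * k.+1%:R * dw k - G k.+1)).
    apply: eq_bigr => [[k hk]] _ /=; rewrite /G /=.
    rewrite mulrCA dw_shift; last by apply: leq_trans hm.
    ring.
  rewrite sumrB sum_shift (_ : G 0%N = 0); last by rewrite /G /= mulr0 mul0r.
  rewrite subr0 [RHS]sumrB; congr (_ - _).
  apply: (@sum_ext _ (fun k =>
   (poch (- m%:R : R) k / poch (2^-1 + 1) k * k%:R * k.+1%:R * dw k))) => // k hk.
  by rewrite poch_van // !mul0r.
have eA : DA m = \sum_(k < m.+2) poch (- m%:R : R) k / poch 2^-1 k * dw k.
  apply: (@sum_ext _ (fun k => poch (- m%:R : R) k / poch 2^-1 k * dw k)) => // k hk.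
  by rewrite poch_van // !mul0r.
have eB : DB m = \sum_(k < m.+2) poch (- m%:R : R) k / poch (2^-1 + 1) k * dw k.
  apply: (@sum_ext _ (fun k => poch (- m%:R : R) k / poch (2^-1 + 1) k * dw k)) => // k hk.
  by rewrite poch_van // !mul0r.
rewrite (_ : (4 * (x * (x + 1)) + 1) * DB m = 4 * (x * (x + 1) * DB m) + DB m); last by ring.
rewrite L eA eB /DA !mulr_sumr -!big_split /=.
apply: eq_bigr => k _.
have := DIIC m k; rewrite /G.
move: (poch (- m.+1%:R : R) k) (poch (- m%:R : R) k) (poch (- m%:R : R) k.-1)
  (poch (2^-1 + 1 : R) k) (poch (2^-1 + 1 : R) k.-1) (poch (2^-1 : R) k) (dw k) => a b c d e f w E.
transitivity (2 * (m%:R - N%:R) * (a / f) * w); first ring.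
rewrite E; ring.
Qed.
End DH.

Arguments Kr {R}. Arguments DA {R}. Arguments DB {R}. Arguments kv {R}. Arguments dw {R}.

Section Main.
Variable R : numFieldType.
Variables (x : R) (N : nat).

Definition yy := x + N%:R + 1.
Definition MM := (2 * N + 1)%N.
Definition cc := - N%:R - (2^-1 : R).
Definition EE m := Kr yy MM (2 * m)%N = poch 2^-1 m / poch cc m * DA x N m.
Definition OO m := Kr yy MM (2 * m).+1
  = poch (2^-1 + 1) m / poch cc m.+1 * (x + 2^-1) * DB x N m.

Lemma cc_neq0 i : cc + i%:R != 0.
Proof.
apply/eqP => E.
have E2 : ((2 * N + 1)%N%:R : R) = (2 * i)%N%:R.
  apply/eqP; rewrite -subr_eq0 natrD !natrM.
  rewrite (_ : 2%:R * N%:R + 1%:R - 2%:R * i%:R = -2 * (cc + i%:R)); last by rewrite /cc; field.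
  by rewrite E mulr0.
by move/eqP: E2; rewrite eqr_nat => /eqP; lia.
Qed.

Lemma pcc_neq0 k : poch cc k != 0.
Proof. by apply: poch_neq0 => i _; apply: cc_neq0. Qed.

Lemma E0 : EE 0.
Proof.
rewrite /EE /Kr /DA /kv /dw !big_ord1 !poch0 /= expr0.
by rewrite fact0; field.
Qed.

Lemma Ostep m : (m <= N)%N -> EE m -> (0 < m -> OO m.-1)%N -> OO m.
Proof.
move=> hm hE hO.
have rec := @Kr_rec R yy MM (2 * m)%N.
rewrite /EE /OO /MM /yy in rec hE hO *.
have hM : ((2 * m).+1 <= 2 * N + 1)%N by lia.
have nz : (2 * N + 1)%N%:R - (2 * m)%N%:R != 0 :> R.
  by rewrite subr_eq0 eqr_nat; apply/eqP; lia.
rewrite /OO; apply: (mulfI nz).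
have -> : ((2 * N + 1)%N%:R - (2 * m)%N%:R) * Kr (x + N%:R + 1) (2 * N + 1) (2 * m).+1
   = ((2 * N + 1)%N%:R - 2 * (x + N%:R + 1)) * Kr (x + N%:R + 1) (2 * N + 1) (2 * m)%N
     - (2 * m)%N%:R * Kr (x + N%:R + 1) (2 * N + 1) (2 * m).-1.
  by rewrite (rec hM); ring.
rewrite hE.
have DI0 := @DI R x N m.
case: m hm hE hO rec hM nz DI0 => [|m] hm hE hO rec hM nz DI0.
  rewrite /= !mulr0 add0r mul1r mul0r addr0 in DI0.
  rewrite -DI0 !poch0 poch_recr poch0 mul1r.
  have hN : N%:R = - cc - 2^-1 :> R by rewrite /cc; field.
  rewrite natrD natrM hN.
  have h1 := cc_neq0 0.
  move: cc (DA x N 0) h1 => c a h1.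
  by field; rewrite addr0 in h1.
rewrite (_ : ((2 * m.+1).-1 = (2 * m).+1)%N); last by lia.
rewrite (hO isT) /=.
rewrite /= in DI0.
rewrite (_ : DA x N m.+1 = (2 * m.+1%:R + 1) * DB x N m.+1 - 2 * m.+1%:R * DB x N m);
  last by rewrite DI0; ring.
rewrite !H3 (@poch_recr R 2^-1 m) (@poch_recr R cc m.+1).
have hN : N%:R = - cc - 2^-1 :> R by rewrite /cc; field.
rewrite !natrD !natrM hN.
have h1 := cc_neq0 m.+1; have h2 := pcc_neq0 m.+1; have h3 := hn0 R m.
have h4 := half_neq0 R m; have h5 := odd_neq0 R m; have h6 := odd_neq0 R m.+1.
move: cc (poch cc m.+1) (poch (2^-1 : R) m) (DB x N m) (DB x N m.+1) h1 h2 h3 => c P h b0 b1 h1 h2 h3.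
rewrite -!natr1 in h1 *.
by field; rewrite h1 h2.
Qed.

Lemma Estep m : (m.+1 <= N)%N -> EE m -> OO m -> EE m.+1.
Proof.
move=> hm hE hO.
have rec := @Kr_rec R yy MM (2 * m).+1.
rewrite /EE /OO /MM /yy in rec hE hO *.
have hM : ((2 * m).+2 <= 2 * N + 1)%N by lia.
have nz : (2 * N + 1)%N%:R - (2 * m).+1%:R != 0 :> R.
  by rewrite subr_eq0 eqr_nat; apply/eqP; lia.
rewrite (_ : (2 * m.+1 = (2 * m).+2)%N); last by lia.
apply: (mulfI nz).
rewrite (_ : ((2 * N + 1)%N%:R - (2 * m).+1%:R) * Kr (x + N%:R + 1) (2 * N + 1) (2 * m).+2
   = ((2 * N + 1)%N%:R - 2 * (x + N%:R + 1)) * Kr (x + N%:R + 1) (2 * N + 1) (2 * m).+1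
     - (2 * m).+1%:R * Kr (x + N%:R + 1) (2 * N + 1) (2 * m).+1.-1); last first.
  by rewrite (rec hM); ring.
rewrite /= hE hO.
have D2 := @DII R x N m hm.
have nz2 : 2 * (m%:R - N%:R) != 0 :> R.
  by rewrite mulf_neq0 ?two_neq0 // subr_eq0 eqr_nat; apply/eqP; lia.
rewrite (_ : DA x N m.+1 = ((4 * (x * (x + 1)) + 1) * DB x N m
   + (2 * m%:R - 2 * N%:R - 1) * DA x N m) / (2 * (m%:R - N%:R))); last first.
  by rewrite -D2; field; rewrite subr_eq0 eqr_nat; apply/eqP; lia.
rewrite !H3 (@poch_recr R 2^-1 m) (@poch_recr R cc m).
have hN : N%:R = - cc - 2^-1 :> R by rewrite /cc; field.
have h7 : (m%:R - N%:R) != 0 :> R by rewrite subr_eq0 eqr_nat; apply/eqP; lia.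
rewrite -[(2 * m).+1%:R]natr1 !natrD hN.
rewrite hN in h7.
have h1 := cc_neq0 m; have h2 := pcc_neq0 m; have h3 := hn0 R m.
have h4 := half_neq0 R m; have h5 := odd_neq0 R m.
move: cc (poch cc m) (poch (2^-1 : R) m) (DB x N m) (DA x N m) h1 h2 h3 h7 => c P h b a h1 h2 h3 h7.
rewrite -!natr1.
field.
rewrite h1 h2 andbT (_ : m%:R * 2 - (- c * 2 - 1) = 2 * (m%:R - (- c - 2^-1))); last by field.
by rewrite mulf_neq0 // two_neq0.
Qed.

Lemma EO m : (m <= N)%N -> EE m /\ OO m.
Proof.
elim: m => [|m IH] hm.
  by split; [exact: E0 | apply: Ostep => //; exact: E0].
have [hE hO] := IH (ltnW hm).
have hE' := @Estep m hm hE hO.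
by split => //; apply: Ostep.
Qed.
End Main.

Theorem mainTheorem17 (C : numClosedFieldType) (N m : nat) (hm : (m <= N)%N)
  (x : C) :
  krawtchouk (2 * m)%N (x + N%:R + 1) (2^-1) (2 * N + 1)%N
    = poch (2^-1 : C) m / poch (- N%:R - 2^-1) m
        * dualHahn m x (- 2^-1) (2^-1) N
  /\
  krawtchouk (2 * m + 1)%N (x + N%:R + 1) (2^-1) (2 * N + 1)%N
    = poch (3 / 2 : C) m / poch (- N%:R - 2^-1) m.+1
        * (x + 2^-1) * dualHahn m x (2^-1) (- 2^-1) N.
Proof.
have [hE hO] := @EO C x N m hm.
rewrite !krawE DAE DBE (_ : 3 / 2 = 2^-1 + 1 :> C); last by field.
rewrite /EE /OO /yy /MM /cc !addn1 in hE hO *. by split.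
Qed.
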